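(* Let $g(v;a)=v(1-v)(v-a)$, $k>0$, $a\in(0,1)$, and $$d_0(a,k)=\frac{1}{k+1}\min\{k\,d^+(a,k),\,d^-(a)\},\quad d^-(a)=\max_{y\in(a,1)}\frac{g(y;a)}{y},\quad d^+(a,k)=\max_{y\in(1-a,1)}\frac{-g(1-y;a)}{ky}.$$ Then for every $0<d<d_0(a,k)$ the following condition holds: with $h(v)=(k+1)v-\frac1d g(v;a)$, there exist $y_0\in(0,a)$ and $y_1\in(a,1)$ such that $h(y_0)>k+1$, $h(y_1)<0$, and $h'(v)>0$ for all $v\in(0,y_0)\cup(y_1,1)$. *)

(* Defs.v *)
From Stdlib Require Import Reals.
From Coquelicot Require Import Coquelicot.
Open Scope R_scope.

Definition g (v a : R) : R := v * (1 - v) * (v - a).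

(* d^-(a) = max_{y in (a,1)} g(y;a)/y, taken as the supremum of that set
   (the maximum is attained, so sup = max). *)
Definition d_minus (a : R) : R :=
  real (Lub_Rbar (fun x => exists y, a < y < 1 /\ x = g y a / y)).

Definition d_plus (a k : R) : R :=
  real (Lub_Rbar (fun x => exists y, 1 - a < y < 1 /\ x = - g (1 - y) a / (k * y))).

Definition d0 (a k : R) : R := / (k + 1) * Rmin (k * d_plus a k) (d_minus a).

Definition h (a k d : R) (v : R) : R := (k + 1) * v - / d * g v a.

(* Main.v *)
Require Import Defs.
From Stdlib Require Import Reals Lra Psatz.
From Coquelicot Require Import Coquelicot.
Open Scope R_scope.

Lemma h_mul (a k d v : R) : d <> 0 ->
  d * h a k d v = v^3 - (1+a)*v^2 + (a + d*(k+1))*v.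
Proof. intros; unfold h, g; field; auto. Qed.

Lemma Derive_h (a k d v : R) : d <> 0 ->
  d * Derive (h a k d) v = 3*v^2 - 2*(1+a)*v + (a + d*(k+1)).
Proof.
  intros Hd.
  assert (E : Derive (h a k d) v = (k+1) - /d * (-3*v^2 + 2*(1+a)*v - a)).
  { apply is_derive_unique. unfold h, g. auto_derive; auto. ring. }
  rewrite E. field; auto.
Qed.

Lemma lub_real_le (E : R -> Prop) (c : R) : 0 <= c ->
  (forall x, E x -> x <= c) -> real (Lub_Rbar E) <= c.
Proof.
  intros Hc HE.
  destruct (Lub_Rbar_correct E) as [_ Hl].
  assert (Hb : Rbar_le (Lub_Rbar E) (Finite c)).
  { apply Hl. intros x Hx. simpl. apply HE; auto. }
  destruct (Lub_Rbar E); simpl in *; auto; try lra; contradiction.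
Qed.

Theorem lemma8p4 (a k d : R) (hk : 0 < k) (ha : 0 < a < 1)
  (hd0 : 0 < d) (hd1 : d < d0 a k) :
  exists y0 y1 : R,
    0 < y0 < a /\ a < y1 < 1 /\
    h a k d y0 > k + 1 /\ h a k d y1 < 0 /\
    (forall v : R, (0 < v < y0 \/ y1 < v < 1) -> Derive (h a k d) v > 0).
Proof.
  assert (Hdn : d <> 0) by lra.
  assert (Hk1 : 0 < k + 1) by lra.
  assert (HK : 0 < d * (k+1)) by nra.
  unfold d0 in hd1.
  assert (Hq : exists q, a < q < 1 /\ g q a / q > d*(k+1)).
  { apply Classical_Prop.NNPP; intro N.
    assert (L : d_minus a <= d*(k+1)).
    { unfold d_minus; apply lub_real_le; [lra|].
      intros x [y [Hy ->]]. apply Rnot_gt_le. intro G. apply N. exists y; split; auto. }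
    assert (M : Rmin (k * d_plus a k) (d_minus a) <= d*(k+1)).
    { eapply Rle_trans; [apply Rmin_r|]; auto. }
    assert (/ (k+1) * Rmin (k * d_plus a k) (d_minus a) <= / (k+1) * (d*(k+1))).
    { apply Rmult_le_compat_l; auto. left; apply Rinv_0_lt_compat; lra. }
    replace (/ (k+1) * (d*(k+1))) with d in H by (field; lra). lra. }
  assert (Hp : exists y, 1 - a < y < 1 /\ - g (1 - y) a / (k * y) > d*(k+1)/k).
  { apply Classical_Prop.NNPP; intro N.
    assert (L : d_plus a k <= d*(k+1)/k).
    { unfold d_plus; apply lub_real_le.
      { apply Rlt_le. apply Rdiv_lt_0_compat; lra. }
      intros x [y [Hy ->]]. apply Rnot_gt_le. intro G. apply N. exists y; split; auto. }
    assert (L2 : k * d_plus a k <= d*(k+1)).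
    { replace (d*(k+1)) with (k * (d*(k+1)/k)) by (field; lra).
      apply Rmult_le_compat_l; lra. }
    assert (M : Rmin (k * d_plus a k) (d_minus a) <= d*(k+1)).
    { eapply Rle_trans; [apply Rmin_l|]; auto. }
    assert (/ (k+1) * Rmin (k * d_plus a k) (d_minus a) <= / (k+1) * (d*(k+1))).
    { apply Rmult_le_compat_l; auto. left; apply Rinv_0_lt_compat; lra. }
    replace (/ (k+1) * (d*(k+1))) with d in H by (field; lra). lra. }
  destruct Hq as [q [Hq1 Hq2]].
  destruct Hp as [y [Hy1 Hy2]].
  set (p := 1 - y).
  set (s := 1 + a).
  set (c := a + d*(k+1)).
  assert (Qq : q^2 - s*q + c < 0).
  { unfold g in Hq2. assert (Hq0 : 0 < q) by lra.
    assert (q * (1 - q) * (q - a) > d*(k+1) * q).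
    { apply Rmult_gt_reg_l with (/q). apply Rinv_0_lt_compat; lra.
      replace (/q * (q * (1 - q) * (q - a))) with (q * (1 - q) * (q - a) / q) by (field; lra).
      replace (/q * (d*(k+1)*q)) with (d*(k+1)) by (field; lra). lra. }
    unfold s, c. nra. }
  assert (Hpa : 0 < p < a) by (unfold p; lra).
  assert (Hpv : - g p a > d*(k+1)*(1-p)).
  { assert (Hky : 0 < k * y) by nra.
    apply Rmult_gt_reg_l with (/(k*y)). apply Rinv_0_lt_compat; lra.
    replace (/ (k*y) * - g p a) with (- g (1 - y) a / (k * y)) by (unfold p; field; lra).
    replace (/ (k*y) * (d*(k+1)*(1-p))) with (d*(k+1)/k) by (unfold p; field; lra). lra. }
  assert (Hp3 : p^3 - s*p^2 + c*p > d*(k+1)).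
  { unfold g in Hpv. unfold s, c. nra. }
  assert (Hs4 : s*s > 4*c) by (generalize (pow2_ge_0 (q - s/2)); intro; nra).
  assert (Hc : 0 < c) by (unfold c; lra).
  set (D := sqrt (s*s - 3*c)).
  assert (HD0 : 0 <= D) by apply sqrt_pos.
  assert (HD2 : D*D = s*s - 3*c) by (apply sqrt_sqrt; lra).
  assert (HDs : D > s/2).
  { apply Rnot_le_gt; intro N. assert (D*D <= (s/2)*(s/2)) by (apply Rmult_le_compat; lra). nra. }
  assert (HDs' : D < s).
  { apply Rnot_le_gt; intro N. assert (s*s <= D*D) by (apply Rmult_le_compat; unfold s in *; lra). nra. }
  set (r1 := (s - D)/3).
  set (r2 := (s + D)/3).
  assert (Qf : forall v, 3*v^2 - 2*s*v + c = 3*(v-r1)*(v-r2)).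
  { intro v. unfold r1, r2. nra. }
  assert (Hr2 : r2 < 1).
  { unfold r2. unfold s, c in *. nra. }
  assert (Hr1 : 0 < r1) by (unfold r1; lra).
  assert (Hr12 : r1 < r2) by (unfold r1, r2; lra).
  assert (Hder : forall v, (v < r1 \/ r2 < v) -> Derive (h a k d) v > 0).
  { intros v Hv. apply Rmult_gt_reg_l with d; auto. rewrite Rmult_0_r.
    rewrite Derive_h; auto. fold s c. rewrite Qf.
    destruct Hv; nra. }
  assert (Hcr1 : c = 2*s*r1 - 3*r1^2) by (generalize (Qf r1); intro; nra).
  assert (Hcr2 : c = 2*s*r2 - 3*r2^2) by (generalize (Qf r2); intro; nra).
  assert (Hh : forall v, d * h a k d v = v^3 - s*v^2 + c*v) by (intro; rewrite h_mul; auto).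
  destruct (Rle_lt_dec p r1) as [P1|P1]; destruct (Rle_lt_dec r2 q) as [Q1|Q1].
  - exists p, q. repeat split; try lra.
    + apply Rmult_gt_reg_l with d; auto. rewrite Hh. nra.
    + apply Rmult_lt_reg_l with d; auto. rewrite Hh. nra.
    + intros v [Hv|Hv]; apply Hder; lra.
  - exists p, r2. repeat split; try lra.
    + apply Rmult_gt_reg_l with d; auto. rewrite Hh. nra.
    + apply Rmult_lt_reg_l with d; auto. rewrite Hh.
      assert (E : q^3 - s*q^2 + c*q - (r2^3 - s*r2^2 + c*r2) = (q-r2)^2*(q+2*r2-s))
        by (rewrite Hcr2; ring).
      assert (0 <= (q-r2)^2*(q+2*r2-s)).
      { apply Rmult_le_pos. nra. unfold r2; lra. }
      nra.
    + intros v [Hv|Hv]; apply Hder; lra.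
  - exists r1, q. repeat split; try lra.
    + apply Rmult_gt_reg_l with d; auto. rewrite Hh.
      assert (E : p^3 - s*p^2 + c*p - (r1^3 - s*r1^2 + c*r1) = (p-r1)^2*(p+2*r1-s))
        by (rewrite Hcr1; ring).
      assert ((p-r1)^2*(p+2*r1-s) <= 0).
      { apply Rmult_le_0_l. nra. unfold r1, s in *; lra. }
      nra.
    + apply Rmult_lt_reg_l with d; auto. rewrite Hh. nra.
    + intros v [Hv|Hv]; apply Hder; lra.
  - exists r1, r2. repeat split; try lra.
    + apply Rmult_gt_reg_l with d; auto. rewrite Hh.
      assert (E : p^3 - s*p^2 + c*p - (r1^3 - s*r1^2 + c*r1) = (p-r1)^2*(p+2*r1-s))
        by (rewrite Hcr1; ring).
      assert ((p-r1)^2*(p+2*r1-s) <= 0).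
      { apply Rmult_le_0_l. nra. unfold r1, s in *; lra. }
      nra.
    + apply Rmult_lt_reg_l with d; auto. rewrite Hh.
      assert (E : q^3 - s*q^2 + c*q - (r2^3 - s*r2^2 + c*r2) = (q-r2)^2*(q+2*r2-s))
        by (rewrite Hcr2; ring).
      assert (0 <= (q-r2)^2*(q+2*r2-s)).
      { apply Rmult_le_pos. nra. unfold r2; lra. }
      nra.
    + intros v [Hv|Hv]; apply Hder; lra.
Qed.
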